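(* Let $S\subseteq \mathbb{R}^n/\mathbb{R}\mathbb{1}$ be a finite set of points and let $k\le |S|$ be a positive integer. The tropical $k$-means clustering algorithm applied to $S$ with $k$ clusters (described in the context) terminates after finitely many iterations.
   Context: $\mathbb{1}=(1,\dots,1)\in\mathbb{R}^n$, and $\mathbb{R}^n/\mathbb{R}\mathbb{1}$ is the tropical torus. The asymmetric tropical distance is $d_{\Delta}(x,y)=\sum_{i=1}^n (y_i-x_i) + n\max_{i}(x_i-y_i)$ for $x,y\in\mathbb{R}^n$; it is invariant under adding multiples of $\mathbb{1}$ to either argument and so is defined on $\mathbb{R}^n/\mathbb{R}\mathbb{1}$. A tropical linear combination of points $v_1,\dots,v_l\in\mathbb{R}^n$ is a point $\max_i (v_i+\lambda_i\mathbb{1})$ (coordinatewise maximum) with $\lambda_i\in\mathbb{R}$. For a finite set $C\subseteq\mathbb{R}^n/\mathbb{R}\mathbb{1}$, the Fermat--Weber set $\mathrm{FW}(C)$ is the set of points $y\in\mathbb{R}^n/\mathbb{R}\mathbb{1}$ minimizing $\sum_{s\in C} d_\Delta(s,y)$; it is a polytope that is also closed under tropical linear combinations, and it has a unique minimal finite set of points $v_1,\dots,v_l$ (its tropical vertices) such that every point of $\mathrm{FW}(C)$ is a tropical linear combination of $v_1,\dots,v_l$. The tropical median of $C$ is the ordinary componentwise mean $\frac1l\sum_{i=1}^l v_i$ of the tropical vertices. Tropical $k$-means clustering algorithm: choose initial centroids $c_1,\dots,c_k$ (e.g. $k$ points of $S$ chosen at random); then repeat: (A-step) for each $j$, set $C_j$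 to be the set of $s\in S$ with $j=\arg\min_{i\in[k]} d_\Delta(s,c_i)$; (M-step) for each cluster $C_j$, replace $c_j$ by the tropical median of $C_j$; stop when the cluster assignments do not change. *)

(* Defs.v *)
From mathcomp Require Import all_boot all_order all_algebra.
From mathcomp Require Import reals.
Set Implicit Arguments. Unset Strict Implicit. Unset Printing Implicit Defensive.
Import Order.TTheory GRing.Theory Num.Theory.
Local Open Scope ring_scope.

Section Tropical.
Variables (R : realType) (n : nat).
Notation vec := 'rV[R]_n.

(* maximum of a finite family indexed by 'I_p (for p > 0 this is the
   genuine maximum: the default is one of the terms). *)
Definition maxI (p : nat) (F : 'I_p -> R) : R :=
  \big[Num.max/head 0 [seq F i | i <- enum 'I_p]]_(i < p) F i.

(* x and y represent the same point of R^n / R1 *)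
Definition trop_equiv (x y : vec) : Prop :=
  exists lam : R, forall i : 'I_n, y 0 i = x 0 i + lam.

Definition dDelta (x y : vec) : R :=
  \sum_(i < n) (y 0 i - x 0 i) + n%:R * maxI (fun i : 'I_n => x 0 i - y 0 i).

Definition FW (C : seq vec) (y : vec) : Prop :=
  forall z : vec, \sum_(s <- C) dDelta s y <= \sum_(s <- C) dDelta s z.

Definition trop_comb (W : seq vec) (y : vec) : Prop :=
  W != [::] /\
  exists lam : 'I_(size W) -> R,
    forall j : 'I_n, y 0 j = maxI (fun i : 'I_(size W) => (nth 0 W i) 0 j + lam i).

Definition generates_FW (C W : seq vec) : Prop :=
  forall y, FW C y -> trop_comb W y.

(* V (a list of pairwise distinct points of the torus) is the minimal
   finite set of tropical vertices of FW(C). *)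
Definition trop_vertices (C V : seq vec) : Prop :=
  (forall i j : 'I_(size V), trop_equiv (nth 0 V i) (nth 0 V j) -> i = j) /\
  (forall v, v \in V -> FW C v) /\
  generates_FW C V /\
  (forall W : seq vec,
     (forall w, w \in W -> exists2 v, v \in V & trop_equiv v w) ->
     generates_FW C W ->
     forall v, v \in V -> exists2 w, w \in W & trop_equiv v w).

Definition trop_median (C : seq vec) (m : vec) : Prop :=
  exists V : seq vec, trop_vertices C V /\
    trop_equiv ((size V)%:R^-1 *: \sum_(v <- V) v) m.

(* A-step: j is the arg min of i |-> dDelta s (c i), ties broken by
   taking the smallest index. *)
Definition nearest (k : nat) (c : 'I_k -> vec) (s : vec) (j : 'I_k) : Prop :=
  (forall i : 'I_k, dDelta s (c j) <= dDelta s (c i)) /\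
  (forall i : 'I_k, (i < j)%N -> dDelta s (c j) < dDelta s (c i)).

Definition cluster (m k : nat) (s : 'I_m -> vec) (a : 'I_m -> 'I_k) (j : 'I_k)
  : seq vec := [seq s i | i <- enum 'I_m & a i == j].

(* A run of tropical k-means on S = {s_0,...,s_(m-1)} with initial centroids
   c0: c t are the centroids before iteration t, a t the assignment computed
   in the A-step of iteration t, and c (t+1) the result of its M-step. *)
Definition kmeans_run (m k : nat) (s : 'I_m -> vec) (c0 : 'I_k -> vec)
    (c : nat -> 'I_k -> vec) (a : nat -> 'I_m -> 'I_k) : Prop :=
  c 0%N = c0 /\
  (forall t i, nearest (c t) (s i) (a t i)) /\
  (forall t j, if cluster s (a t) j is [::] then c t.+1 j = c t j
               else trop_median (cluster s (a t) j) (c t.+1 j)).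

End Tropical.

(* Main.v *)
Require Import Defs.
From mathcomp Require Import all_boot all_order all_algebra.
From mathcomp Require Import reals.
From mathcomp Require Import all_classical all_reals all_analysis.
From mathcomp Require Import ring lra.
Import Order.TTheory GRing.Theory Num.Theory.
Import numFieldNormedType.Exports.
Local Open Scope ring_scope.
Set Implicit Arguments. Unset Strict Implicit.
Lemma bigmax_ge (R : realType) (I : eqType) (x0 : R) (r : seq I) (F : I -> R) i :
  i \in r -> F i <= \big[Num.max/x0]_(j <- r) F j.
Proof.
elim: r => [//|j r IH]; rewrite in_cons big_cons le_max => /orP[/eqP->|/IH->];
  by rewrite ?lexx ?orbT.
Qed.

Lemma bigmax_attain (R : realType) (I : eqType) (x0 : R) (r : seq I) (F : I -> R) :
  \big[Num.max/x0]_(j <- r) F j = x0 \/ exists2 i, i \in r & \big[Num.max/x0]_(j <- r) F j = F i.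
Proof.
elim: r => [|j r IH]; first by left; rewrite big_nil.
rewrite big_cons.
set b := \big[Num.max/x0]_(j0 <- r) F j0 in IH *.
have [h|h] := leP (F j) b.
  case: IH => [E|[i ir E]]; first by left.
  by right; exists i; rewrite ?in_cons ?ir ?orbT.
by right; exists j; rewrite ?mem_head.
Qed.

Lemma maxI_ge (R : realType) p (F : 'I_p -> R) i : F i <= maxI F.
Proof. by rewrite /maxI; apply: bigmax_ge; rewrite mem_index_enum. Qed.

Lemma maxI_attain (R : realType) p (F : 'I_p -> R) : (0 < p)%N -> exists i, maxI F = F i.
Proof.
move=> p0; rewrite /maxI.
have [E|[i _ E]] := bigmax_attain (head 0 [seq F i | i <- enum 'I_p]) (index_enum 'I_p) F;
  last by exists i.
have : (0 < size (enum 'I_p))%N by rewrite size_enum_ord.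
case: (enum 'I_p) E => [//|i0 r] /= E _; by exists i0.
Qed.

Lemma maxI_le (R : realType) p (F : 'I_p -> R) c : (0 < p)%N -> (forall i, F i <= c) -> maxI F <= c.
Proof. by move=> p0 H; have [i ->] := maxI_attain F p0. Qed.

Lemma maxI_shift (R : realType) p (F : 'I_p -> R) c : (0 < p)%N ->
  maxI (fun i => F i - c) = maxI F - c.
Proof.
move=> p0; apply/le_anti/andP; split.
  apply: maxI_le => // j /=; have := maxI_ge F j; lra.
have [j ->] := maxI_attain F p0.
have := maxI_ge (fun i => F i - c) j; simpl; lra.
Qed.

Lemma dDelta_n0 (R : realType) (s y : 'rV[R]_0) : dDelta s y = 0.
Proof. by rewrite /dDelta big_ord0 mul0r addr0. Qed.

Lemma dDelta_alt (R : realType) n (s y : 'rV[R]_n) :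
  dDelta s y = \sum_(i < n) (maxI (fun j => s 0 j - y 0 j) - (s 0 i - y 0 i)).
Proof.
rewrite /dDelta [RHS]sumrB sumr_const card_ord -mulr_natl.
have -> : \sum_(i < n) (y 0 i - s 0 i) = - \sum_(i < n) (s 0 i - y 0 i).
  by rewrite -sumrN; apply: eq_bigr => i _; rewrite opprB.
lra.
Qed.

Lemma dDelta_ge0 (R : realType) n (s y : 'rV[R]_n) : 0 <= dDelta s y.
Proof.
rewrite dDelta_alt; apply: sumr_ge0 => i _.
by rewrite subr_ge0 (maxI_ge (fun j => s 0 j - y 0 j) i).
Qed.

Lemma dDelta_ge (R : realType) n (s y : 'rV[R]_n) i j :
  (s 0 j - y 0 j) - (s 0 i - y 0 i) <= dDelta s y.
Proof.
rewrite dDelta_alt (bigD1 i) //=.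
have H1 := maxI_ge (fun j => s 0 j - y 0 j) j.
have H2 : 0 <= \sum_(k < n | k != i) (maxI (fun j => s 0 j - y 0 j) - (s 0 k - y 0 k)).
  apply: sumr_ge0 => k _.
  by rewrite subr_ge0 (maxI_ge (fun j => s 0 j - y 0 j) k).
simpl in H1; lra.
Qed.

Lemma dDelta_equiv (R : realType) n (s y y' : 'rV[R]_n) :
  trop_equiv y y' -> dDelta s y' = dDelta s y.
Proof.
case: n s y y' => [|n] s y y' [l Hl]; first by rewrite !dDelta_n0.
rewrite /dDelta.
have -> : \sum_(i < n.+1) (y' 0 i - s 0 i) = \sum_(i < n.+1) (y 0 i - s 0 i) + n.+1%:R * l.
  have -> : n.+1%:R * l = \sum_(i < n.+1) l by rewrite sumr_const card_ord mulr_natl.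
  rewrite -big_split /=.
  by apply: eq_bigr => i _; rewrite Hl; lra.
have -> : maxI (fun i : 'I_n.+1 => s 0 i - y' 0 i) = maxI (fun i => s 0 i - y 0 i) - l.
  rewrite -maxI_shift //; congr maxI; apply: boolp.funext => i; rewrite Hl; lra.
lra.
Qed.

Lemma sum_le_mem (R : realType) n (C : seq 'rV[R]_n) s y :
  s \in C -> dDelta s y <= \sum_(t <- C) dDelta t y.
Proof.
move=> sC; rewrite (big_rem s sC) /= lerDl; apply: sumr_ge0 => t _; exact: dDelta_ge0.
Qed.

Lemma FW_equiv (R : realType) n (C : seq 'rV[R]_n) y y' :
  trop_equiv y y' -> FW C y -> FW C y'.
Proof.
move=> E H z; rewrite (eq_bigr (fun t => dDelta t y)); first exact: H.
by move=> t _; apply: dDelta_equiv.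
Qed.

Lemma sum_const_seq (R : realType) (T : Type) (V : seq T) (x : R) :
  \sum_(v <- V) x = (size V)%:R * x.
Proof.
elim: V => [|v V IH]; first by rewrite big_nil mul0r.
by rewrite big_cons IH /= -add1n natrD mulrDl mul1r.
Qed.

Lemma dDelta_mean (R : realType) n (V : seq 'rV[R]_n) (s : 'rV[R]_n) :
  V != [::] ->
  dDelta s ((size V)%:R^-1 *: \sum_(v <- V) v) <=
  (size V)%:R^-1 * \sum_(v <- V) dDelta s v.
Proof.
case: n V s => [|n] V s V0.
  by rewrite dDelta_n0 big1 ?mulr0 // => v _; rewrite dDelta_n0.
have N0 : (size V)%:R != 0 :> R by rewrite pnatr_eq0; case: V V0.
set N := (size V)%:R in N0 *.
set mu := _ *: _.
have muE : forall i, mu 0 i = N^-1 * \sum_(v <- V) v 0 i.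
  by move=> i; rewrite /mu mxE summxE.
pose a (v : 'rV[R]_n.+1) := \sum_(i < n.+1) (v 0 i - s 0 i).
pose M (v : 'rV[R]_n.+1) := maxI (fun i => s 0 i - v 0 i).
have dE : forall v, dDelta s v = a v + n.+1%:R * M v by [].
rewrite (eq_bigr (fun v => a v + n.+1%:R * M v)) // big_split /= mulrDr -mulr_sumr.
rewrite dE; apply: lerD.
  rewrite /a exchange_big mulr_sumr /=; rewrite le_eqVlt; apply/orP; left; apply/eqP; apply: eq_bigr => i _.
  rewrite muE sumrB sum_const_seq; field.
  done.
rewrite mulrCA; apply: ler_wpM2l; first by [].
rewrite /M; clear dE.
apply: maxI_le => // i; rewrite muE.
have -> : s 0 i = N^-1 * \sum_(v <- V) s 0 i by rewrite sum_const_seq mulrA mulVf ?mul1r.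
rewrite -mulrBr -sumrB; apply: ler_wpM2l; first by rewrite invr_ge0 ler0n.
apply: ler_sum => v _.
exact: (maxI_ge (fun i => s 0 i - v 0 i) i).
Qed.

Lemma FW_mean (R : realType) n (C V : seq 'rV[R]_n) :
  V != [::] -> (forall v, v \in V -> FW C v) ->
  FW C ((size V)%:R^-1 *: \sum_(v <- V) v).
Proof.
move=> V0 HV z.
have N0 : (size V)%:R != 0 :> R by rewrite pnatr_eq0; case: V V0 HV.
apply: (@le_trans _ _ (\sum_(s <- C) ((size V)%:R^-1 * \sum_(v <- V) dDelta s v))).
  by apply: ler_sum => s _; apply: dDelta_mean.
rewrite -mulr_sumr exchange_big /=.
apply: (@le_trans _ _ ((size V)%:R^-1 * \sum_(v <- V) \sum_(s <- C) dDelta s z)).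
  apply: ler_wpM2l; first by rewrite invr_ge0 ler0n.
  rewrite big_seq [X in _ <= X]big_seq; apply: ler_sum => v vV; exact: HV.
by rewrite (sum_const_seq V) mulrA mulVf ?mul1r.
Qed.
Lemma cont_coord (R : realType) n (i : 'I_n) :
  continuous (fun y : 'rV[R]_n => y 0 i).
Proof. exact: coord_continuous. Qed.

Lemma cont_sum (R : realType) n (I : Type) (r : seq I) (F : I -> 'rV[R]_n -> R) :
  (forall i, continuous (F i)) -> continuous (fun y => \sum_(i <- r) F i y).
Proof.
move=> HF; elim: r => [|i r IH].
  under eq_fun do rewrite big_nil. exact: cst_continuous.
under eq_fun do rewrite big_cons.
move=> y; apply: continuousD; [exact: HF|exact: IH].
Qed.

Lemma cont_max (R : realType) n (I : Type) (r : seq I) (x0 : 'rV[R]_n -> R) (F : I -> 'rV[R]_n -> R) :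
  continuous x0 -> (forall i, continuous (F i)) -> continuous (fun y => \big[Num.max/x0 y]_(i <- r) F i y).
Proof.
move=> H0 HF; elim: r => [|i r IH].
  by under eq_fun do rewrite big_nil.
under eq_fun do rewrite big_cons.
exact: max_fun_continuous.
Qed.

Lemma cont_maxI (R : realType) n p (F : 'I_p -> 'rV[R]_n -> R) :
  (forall i, continuous (F i)) -> continuous (fun y => maxI (fun i => F i y)).
Proof.
move=> HF; rewrite /maxI; apply: cont_max => //.
case: (enum 'I_p) => [|i r] /=; [exact: cst_continuous|exact: HF].
Qed.

Lemma contD (R : realType) n (f g : 'rV[R]_n -> R) :
  continuous f -> continuous g -> continuous (fun y => f y + g y).
Proof. move=> hf hg y; apply: continuousD; [exact: hf|exact: hg]. Qed.
Lemma contB (R : realType) n (f g : 'rV[R]_n -> R) :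
  continuous f -> continuous g -> continuous (fun y => f y - g y).
Proof. move=> hf hg y; apply: continuousB; [exact: hf|exact: hg]. Qed.
Lemma contM (R : realType) n (f g : 'rV[R]_n -> R) :
  continuous f -> continuous g -> continuous (fun y => f y * g y).
Proof. move=> hf hg y; apply: continuousM; [exact: hf|exact: hg]. Qed.

Lemma cont_dDelta (R : realType) n (s : 'rV[R]_n) : continuous (dDelta s).
Proof.
rewrite /dDelta; apply: contD.
  apply: cont_sum => i; apply: contB; [exact: cont_coord| exact: cst_continuous].
apply: contM; first exact: cst_continuous.
apply: cont_maxI => i; apply: contB; [exact: cst_continuous| exact: cont_coord].
Qed.

Lemma FW_exists (R : realType) n (C : seq 'rV[R]_n) : C != [::] -> exists y, FW C y.
Proof.
case: n C => [|n] C C0.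
  by exists 0 => z; rewrite !big1 // => t _; rewrite dDelta_n0.
case: C C0 => [//|s0 C'] _; set C := s0 :: C'.
pose F y := \sum_(t <- C) dDelta t y.
pose K := F s0.
have K0 : 0 <= K by apply: sumr_ge0 => t _; exact: dDelta_ge0.
pose B : set 'rV[R]_n.+1 := (fun y : 'rV[R]_n.+1 => forall i, `[s0 0 i - K, s0 0 i + K]%classic (y ord0 i)).
have s0B : B s0.
  move=> i /=; rewrite in_itv /=; apply/andP; split; lra.
have B0 : (B !=set0)%classic by exists s0.
have cB : compact B.
  rewrite /B; apply: (@rV_compact _ _ (fun i => `[s0 0 i - K, s0 0 i + K]%classic)) => i; exact: segment_compact.
have cF : {within B, continuous F}%classic.
  apply: continuous_subspaceT; rewrite /F.
  apply: (@cont_sum R n.+1 _ C (fun t y => dDelta t y)) => t; exact: cont_dDelta.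
have [c cB' Hc] := EVT_min_rV B0 cB cF.
exists c => z; change (F c <= F z).
pose l := s0 0 ord0 - z 0 ord0.
pose z' := \row_i (z 0 i + l).
have Ez : trop_equiv z z' by exists l => i; rewrite mxE.
have -> : F z = F z'.
  by apply: eq_bigr => t _; rewrite (dDelta_equiv t Ez).
have [Hle|Hlt] := leP (F z') K.
  apply: Hc; rewrite inE => i /=; rewrite in_itv /=.
  have d1 := dDelta_ge s0 z' ord0 i.
  have d2 := dDelta_ge s0 z' i ord0.
  have dz : dDelta s0 z' <= F z' by apply: sum_le_mem; rewrite mem_head.
  have e0 : z' 0 ord0 = s0 0 ord0 by rewrite mxE /l; lra.
  apply/andP; split; lra.
apply: le_trans (ltW Hlt); apply: Hc; rewrite inE; exact: s0B.
Qed.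

Lemma median_FW (R : realType) n (C : seq 'rV[R]_n) m :
  C != [::] -> trop_median C m -> FW C m.
Proof.
move=> C0 [V [[_ [HV [HG _]]] E]].
have [y Hy] := FW_exists C0.
have [V0 _] := HG y Hy.
exact: (FW_equiv E (FW_mean V0 HV)).
Qed.

Lemma cost_cluster (R : realType) n m k (s : 'I_m -> 'rV[R]_n) (b : 'I_m -> 'I_k)
  (d : 'I_k -> 'rV[R]_n) :
  \sum_(i < m) dDelta (s i) (d (b i)) =
  \sum_(j < k) \sum_(x <- Defs.cluster s b j) dDelta x (d j).
Proof.
rewrite (partition_big b xpredT) //=; apply: eq_bigr => j _.
rewrite /Defs.cluster big_map big_filter big_enum_cond /=.
by apply: eq_bigr => i /eqP ->.
Qed.

Lemma sum_eq_le (R : realType) m (f g : 'I_m -> R) :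
  (forall i, f i <= g i) -> \sum_(i < m) f i = \sum_(i < m) g i -> forall i, f i = g i.
Proof.
move=> H E i; apply/le_anti; rewrite H /= leNgt; apply/negP => lt.
have : \sum_(i < m) f i < \sum_(i < m) g i.
  rewrite (bigD1 i) // [X in _ < X](bigD1 i) //=.
  by apply: ltr_leD lt _; apply: ler_sum => j _.
by rewrite E ltxx.
Qed.

Unset Implicit Arguments.

Theorem mainTheorem2 (R : realType) (n m k : nat) (s : 'I_m -> 'rV[R]_n)
  (Hs : forall i j : 'I_m, trop_equiv (s i) (s j) -> i = j)
  (Hk : (0 < k)%N) (HkS : (k <= m)%N)
  (c0 : 'I_k -> 'rV[R]_n) :
  forall (c : nat -> 'I_k -> 'rV[R]_n) (a : nat -> 'I_m -> 'I_k),
    kmeans_run s c0 c a ->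
    exists t : nat, a t.+1 = a t.
Proof.
move=> c a [_ [Hnear Hstep]].
pose cost (b : 'I_m -> 'I_k) (d : 'I_k -> 'rV[R]_n) := \sum_(i < m) dDelta (s i) (d (b i)).
pose Psi t := cost (a t) (c t.+1).
pose idx t := (\sum_(i < m) (a t i : nat))%N.
have H1 t : cost (a t) (c t.+1) <= cost (a t) (c t).
  rewrite /cost !cost_cluster; apply: ler_sum => j _.
  have := Hstep t j; case: (Defs.cluster s (a t) j) => [|x l] H.
    by rewrite !big_nil.
  exact: (median_FW _ H).
have H2 t : cost (a t.+1) (c t.+1) <= cost (a t) (c t.+1).
  by apply: ler_sum => i _; apply: (Hnear t.+1 i).1.
have Hdec t : Psi t.+1 <= Psi t by apply: le_trans (H1 t.+1) (H2 t).
have Hsame t u : a t = a u -> Psi t = Psi u.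
  move=> Etu; rewrite /Psi /cost !cost_cluster; apply: eq_bigr => j _.
  have Ht := Hstep t j; have Hu := Hstep u j; rewrite Etu in Ht *.
  move: Ht Hu; case: (Defs.cluster s (a u) j) => [|x l] Ht Hu.
    by rewrite !big_nil.
  by apply/le_anti/andP; split; [exact: (median_FW _ Ht) | exact: (median_FW _ Hu)].
have Hstep2 t : a t.+1 <> a t ->
    Psi t.+1 < Psi t \/ (Psi t.+1 = Psi t /\ (idx t.+1 < idx t)%N).
  move=> Ne; have [lt|ge] := ltP (Psi t.+1) (Psi t); first by left.
  have EP : Psi t.+1 = Psi t by apply/le_anti; rewrite ge Hdec.
  right; split => //.
  have Ec : cost (a t.+1) (c t.+1) = cost (a t) (c t.+1).
    apply/le_anti; rewrite H2 /=; rewrite -/(Psi t) -EP; exact: H1.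
  have Pw := sum_eq_le (fun i => (Hnear t.+1 i).1 (a t i)) Ec.
  have Le i : (a t.+1 i <= a t i)%N.
    rewrite leqNgt; apply/negP => lt.
    have := (Hnear t.+1 i).2 (a t i) lt; rewrite Pw ltxx //.
  have [i Ni] : exists i, a t.+1 i != a t i.
    apply: boolp.contrapT => Hn; apply: Ne; apply: boolp.funext => i.
    by apply/eqP; apply: boolp.contrapT => Hi; apply: Hn; exists i; apply/negP.
  have lti : (a t.+1 i < a t i)%N by rewrite ltn_neqAle Le andbT.
  rewrite /idx (bigD1 i) //= [X in (_ < X)%N](bigD1 i) //= -addSn.
  by apply: leq_add lti _; apply: leq_sum => j _.
case: (boolp.pselect (exists t, a t.+1 = a t)) => // Hno.
have Hne t : a t.+1 <> a t by move=> E; apply: Hno; exists t.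
have Hchain t d : Psi (t + d.+1)%N < Psi t \/
    (Psi (t + d.+1)%N = Psi t /\ (idx (t + d.+1) < idx t)%N).
  elim: d => [|d IH]; first by rewrite addn1; exact: (Hstep2 t (Hne t)).
  rewrite addnS; case: (Hstep2 _ (Hne (t + d.+1)%N)) => [lt1|[eq1 lt1]];
    case: IH => [lt2|[eq2 lt2]].
  - by left; apply: lt_trans lt1 lt2.
  - by left; rewrite -eq2.
  - by left; rewrite eq1.
  - by right; rewrite eq1 eq2; split => //; apply: ltn_trans lt1 lt2.
have Hinj t u : (t < u)%N -> a t <> a u.
  move=> tu E; have := Hchain t (u - t.+1)%N.
  have -> : (t + (u - t.+1).+1 = u)%N by rewrite subnSK // subnKC // ltnW.
  rewrite (Hsame t u E) /idx E ltxx ltnn.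
  by case => // -[].
pose N := #|{ffun 'I_m -> 'I_k}|.
pose f (t : 'I_N.+1) : {ffun 'I_m -> 'I_k} := finfun (a t).
have finj : injective f.
  move=> t u Ef.
  have Eau : a t = a u by apply: boolp.funext => i; rewrite -!(ffunE (a _)) -/(f t) Ef.
  case: (ltngtP t u) => [lt|lt|eq].
  - by case: (Hinj _ _ lt Eau).
  - by case: (Hinj _ _ lt (esym Eau)).
  - exact: val_inj eq.
have := leq_card f finj; rewrite card_ord => HN.
by have := ltnSn N; rewrite ltnNge HN.
Qed.
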